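(* Let $\mathcal{X},\mathcal{Y}$ be recursively presented metric spaces, $x\in\mathcal{X}$, $y\in\mathcal{Y}$. Then $x\leq_M y$ if and only if $x'\leq_1 y'$.
   Context: A recursively presented metric space is a Polish space with compatible complete metric $d$ and a dense sequence $(a_i)$ such that the relations $d(a_i,a_j)<q_r$ and $d(a_i,a_j)\leq q_r$ are recursive in $(i,j,r)$, where $(q_r)$ is a fixed recursive enumeration of the positive rationals; its basic balls are $B_{i,r}=\{x:d(x,a_i)<q_r\}$, coded by $\langle i,r\rangle$. For $x\in\mathcal{X}$ let $\mathrm{Nbase}(x)=\{\langle i,r\rangle: x\in B^{\mathcal{X}}_{i,r}\}$. For $A,B\subseteq\omega$, $A\leq_e B$ (enumeration reducibility) means there is a c.e. set $P$ of pairs $(k,D)$ with $D$ a finite set such that $A=\{k:\exists D\,((k,D)\in P\wedge D\subseteq B)\}$. Define $x\leq_M y$ iff $\mathrm{Nbase}(x)\leq_e\mathrm{Nbase}(y)$. The jump of $x\in\mathcal{X}$ is $x'=\{e\in\omega: x\in\bigcup_{\langle i,r\rangle\in W_e}B^{\mathcal{X}}_{i,r}\}$, where $W_e$ is the $e$-th c.e. subset of $\omega$. $A\leq_1 B$ means there is a recursive injection $h$ with $k\in A\iff h(k)\in B$. *)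

(* Defs.v *)
From Stdlib Require Import Reals Arith Cantor.
Open Scope R_scope.

Definition pr (a b : nat) : nat := Cantor.to_nat (a, b).
Definition p1 (n : nat) : nat := fst (Cantor.of_nat n).
Definition p2 (n : nat) : nat := snd (Cantor.of_nat n).

(* Partial recursive functions nat -> nat (unary, via pairing).        *)
Inductive prf : Type :=
| PZero : prf
| PSucc : prf
| PId   : prf
| PFst  : prf
| PSnd  : prf
| PComp : prf -> prf -> prf
| PPair : prf -> prf -> prf
| PPrec : prf -> prf -> prf       (* h<a,0> = f a ; h<a,n+1> = g <a,<n,h<a,n>>> *)
| PMu   : prf -> prf.             (* x |-> least n with f<x,n> = 0, all earlier defined *)

Inductive eval : prf -> nat -> nat -> Prop :=
| ev_zero x : eval PZero x 0
| ev_succ x : eval PSucc x (S x)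
| ev_id x : eval PId x x
| ev_fst x : eval PFst x (p1 x)
| ev_snd x : eval PSnd x (p2 x)
| ev_comp f g x y z : eval g x y -> eval f y z -> eval (PComp f g) x z
| ev_pair f g x y z : eval f x y -> eval g x z -> eval (PPair f g) x (pr y z)
| ev_prec0 f g a v : eval f a v -> eval (PPrec f g) (pr a 0) v
| ev_precS f g a n v w :
    eval (PPrec f g) (pr a n) v -> eval g (pr a (pr n v)) w ->
    eval (PPrec f g) (pr a (S n)) w
| ev_mu f x n :
    eval f (pr x n) 0 ->
    (forall m, (m < n)%nat -> exists v, v <> 0%nat /\ eval f (pr x m) v) ->
    eval (PMu f) x n.

(* Goedel numbering: e decodes to a program (fuel e suffices since all
   sub-codes are smaller than e).  Every program has a code. *)
Fixpoint dec (fuel n : nat) : prf :=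
  match fuel with
  | O => PZero
  | S k =>
    let t := (n mod 9)%nat in
    let m := (n / 9)%nat in
    match t with
    | 0 => PZero
    | 1 => PSucc
    | 2 => PId
    | 3 => PFst
    | 4 => PSnd
    | 5 => PComp (dec k (p1 m)) (dec k (p2 m))
    | 6 => PPair (dec k (p1 m)) (dec k (p2 m))
    | 7 => PPrec (dec k (p1 m)) (dec k (p2 m))
    | _ => PMu (dec k m)
    end
  end%nat.

Definition code (e : nat) : prf := dec e e.

Definition W (e : nat) : nat -> Prop := fun n => exists v, eval (code e) n v.

Definition ce (A : nat -> Prop) : Prop :=
  exists f : prf, forall n, A n <-> exists v, eval f n v.

Definition recursive_set (A : nat -> Prop) : Prop :=
  exists f : prf, forall n, exists v, eval f n v /\ (v = 0%nat <-> A n).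

Definition recursive_fun (h : nat -> nat) : Prop :=
  exists f : prf, forall n, eval f n (h n).

Definition canon_fin (u : nat) : nat -> Prop := fun i => Nat.testbit u i = true.

Definition e_red (A B : nat -> Prop) : Prop :=
  exists P : nat -> Prop, ce P /\
    forall k, A k <-> exists u, P (pr k u) /\ forall i, canon_fin u i -> B i.

Definition one_red (A B : nat -> Prop) : Prop :=
  exists h : nat -> nat, recursive_fun h /\
    (forall m n, h m = h n -> m = n) /\
    (forall k, A k <-> B (h k)).

Definition q (r : nat) : R := INR (S (p1 r)) / INR (S (p2 r)).

Record RecPresMetric (X : Type) : Type := {
  dist : X -> X -> R;
  pt : nat -> X;
  dist_nonneg : forall x y, 0 <= dist x y;
  dist_eq0 : forall x y, dist x y = 0 <-> x = y;
  dist_sym : forall x y, dist x y = dist y x;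
  dist_tri : forall x y z, dist x z <= dist x y + dist y z;
  dist_complete : forall s : nat -> X,
    (forall eps, 0 < eps -> exists N, forall m n, (N <= m)%nat -> (N <= n)%nat ->
        dist (s m) (s n) < eps) ->
    exists l, forall eps, 0 < eps -> exists N, forall n, (N <= n)%nat ->
        dist (s n) l < eps;
  pt_dense : forall x eps, 0 < eps -> exists i, dist x (pt i) < eps;
  rec_lt : recursive_set (fun k =>
      dist (pt (p1 k)) (pt (p1 (p2 k))) < q (p2 (p2 k)));   (* k = <i,<j,r>> *)
  rec_le : recursive_set (fun k =>
      dist (pt (p1 k)) (pt (p1 (p2 k))) <= q (p2 (p2 k)))
}.

Arguments dist {X} _ _ _.
Arguments pt {X} _ _.

(* basic ball B_{i,r} coded by <i,r> *)
Definition in_ball {X} (M : RecPresMetric X) (k : nat) (x : X) : Prop :=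
  dist M x (pt M (p1 k)) < q (p2 k).

Definition Nbase {X} (M : RecPresMetric X) (x : X) : nat -> Prop :=
  fun k => in_ball M k x.

Definition M_red {X Y} (MX : RecPresMetric X) (x : X)
  (MY : RecPresMetric Y) (y : Y) : Prop :=
  e_red (Nbase MX x) (Nbase MY y).

Definition jump {X} (M : RecPresMetric X) (x : X) : nat -> Prop :=
  fun e => exists k, W e k /\ in_ball M k x.

(* Main.v *)
Require Import Defs.
From Stdlib Require Import Reals Arith Cantor Lia Lra Setoid Morphisms Classical IndefiniteDescription.
Open Scope nat_scope.

Lemma p1_pr a b : p1 (pr a b) = a.
Proof. unfold p1, pr. now rewrite Cantor.cancel_of_to. Qed.
Lemma p2_pr a b : p2 (pr a b) = b.
Proof. unfold p2, pr. now rewrite Cantor.cancel_of_to. Qed.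
Lemma pr_p1p2 n : pr (p1 n) (p2 n) = n.
Proof. unfold p1, p2, pr. rewrite <- surjective_pairing. apply Cantor.cancel_to_of. Qed.
Lemma pr_inj a b c d : pr a b = pr c d -> a = c /\ b = d.
Proof. intro H. pose proof (f_equal p1 H). pose proof (f_equal p2 H).
  rewrite !p1_pr in *; rewrite !p2_pr in *. auto. Qed.
Lemma pr_ge a b : a + b <= pr a b.
Proof. unfold pr. pose proof (Cantor.to_nat_non_decreasing a b). lia. Qed.
Lemma pr_lt_S a n : pr a n < pr a (S n).
Proof. unfold pr. pose proof (Cantor.to_nat_spec a n). pose proof (Cantor.to_nat_spec a (S n)).
  nia. Qed.
Lemma p1_le n : p1 n <= n.
Proof. rewrite <- (pr_p1p2 n) at 2. pose proof (pr_ge (p1 n) (p2 n)). lia. Qed.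
Lemma p2_le n : p2 n <= n.
Proof. rewrite <- (pr_p1p2 n) at 2. pose proof (pr_ge (p1 n) (p2 n)). lia. Qed.
Global Opaque pr p1 p2.
Section EI.
Variable P : prf -> nat -> nat -> Prop.
Hypothesis Hz : forall x, P PZero x 0.
Hypothesis Hs : forall x, P PSucc x (S x).
Hypothesis Hi : forall x, P PId x x.
Hypothesis Hf : forall x, P PFst x (p1 x).
Hypothesis Hsn : forall x, P PSnd x (p2 x).
Hypothesis Hc : forall f g x y z, eval g x y -> P g x y -> eval f y z -> P f y z -> P (PComp f g) x z.
Hypothesis Hp : forall f g x y z, eval f x y -> P f x y -> eval g x z -> P g x z -> P (PPair f g) x (pr y z).
Hypothesis Hp0 : forall f g a v, eval f a v -> P f a v -> P (PPrec f g) (pr a 0) v.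
Hypothesis HpS : forall f g a n v w, eval (PPrec f g) (pr a n) v -> P (PPrec f g) (pr a n) v ->
   eval g (pr a (pr n v)) w -> P g (pr a (pr n v)) w -> P (PPrec f g) (pr a (S n)) w.
Hypothesis Hm : forall f x n, eval f (pr x n) 0 -> P f (pr x n) 0 ->
   (forall m, m < n -> exists v, v <> 0 /\ eval f (pr x m) v /\ P f (pr x m) v) ->
   P (PMu f) x n.

Fixpoint eval_ind' p x v (H : eval p x v) {struct H} : P p x v.
Proof.
  destruct H.
  - apply Hz. - apply Hs. - apply Hi. - apply Hf. - apply Hsn.
  - eapply Hc; eauto.
  - eapply Hp; eauto.
  - eapply Hp0; eauto.
  - eapply HpS; eauto.
  - apply Hm; auto. intros m Hlt. destruct (H0 m Hlt) as [w [Hw Hev]].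
    exists w. split; [exact Hw|]. split; [exact Hev|]. exact (eval_ind' _ _ _ Hev).
Qed.
End EI.

Lemma inv_comp f g x v : eval (PComp f g) x v -> exists y, eval g x y /\ eval f y v.
Proof. intro H. remember (PComp f g) as p eqn:E. destruct H; try discriminate. injection E as -> ->. eauto. Qed.
Lemma inv_pair f g x v : eval (PPair f g) x v -> exists y z, v = pr y z /\ eval f x y /\ eval g x z.
Proof. intro H. remember (PPair f g) as p eqn:E. destruct H; try discriminate. injection E as -> ->. eauto. Qed.
Lemma inv_prec f g x v : eval (PPrec f g) x v ->
  (exists a, x = pr a 0 /\ eval f a v) \/
  (exists a n w, x = pr a (S n) /\ eval (PPrec f g) (pr a n) w /\ eval g (pr a (pr n w)) v).
Proof. intro H. remember (PPrec f g) as p eqn:E. destruct H; try discriminate; injection E as -> ->; eauto 10. Qed.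
Lemma inv_mu f x v : eval (PMu f) x v -> eval f (pr x v) 0 /\
    (forall m, m < v -> exists w, w <> 0 /\ eval f (pr x m) w).
Proof. intro H. remember (PMu f) as p eqn:E. destruct H; try discriminate. injection E as ->. auto. Qed.
Lemma inv_zero x v : eval PZero x v -> v = 0.
Proof. intro H. remember PZero as p eqn:E. destruct H; try discriminate; auto. Qed.
Lemma inv_succ x v : eval PSucc x v -> v = S x.
Proof. intro H. remember PSucc as p eqn:E. destruct H; try discriminate; auto. Qed.
Lemma inv_id x v : eval PId x v -> v = x.
Proof. intro H. remember PId as p eqn:E. destruct H; try discriminate; auto. Qed.
Lemma inv_fst x v : eval PFst x v -> v = p1 x.
Proof. intro H. remember PFst as p eqn:E. destruct H; try discriminate; auto. Qed.
Lemma inv_snd x v : eval PSnd x v -> v = p2 x.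
Proof. intro H. remember PSnd as p eqn:E. destruct H; try discriminate; auto. Qed.

Lemma eval_det p x v : eval p x v -> forall v', eval p x v' -> v = v'.
Proof.
  intro H. induction H using eval_ind'; intros v' H'.
  - now apply inv_zero in H'.
  - now apply inv_succ in H'.
  - now apply inv_id in H'.
  - now apply inv_fst in H'.
  - now apply inv_snd in H'.
  - apply inv_comp in H' as [y' [H1 H2]]. apply IHeval1 in H1. subst. auto.
  - apply inv_pair in H' as [y' [z' [-> [H1 H2]]]]. f_equal; auto.
  - apply inv_prec in H' as [[a' [E H1]]|[a' [n' [w' [E _]]]]]; apply pr_inj in E as [E1 E2]; subst.
    + auto.
    + discriminate.
  - apply inv_prec in H' as [[a' [E H1]]|[a' [n' [w' [E [H1 H2]]]]]]; apply pr_inj in E as [E1 E2]; subst.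
    + discriminate.
    + injection E2 as <-. apply IHeval1 in H1. subst. auto.
  - apply inv_mu in H' as [H0' Hlt'].
    destruct (Nat.lt_trichotomy n v') as [Hl|[Hl|Hl]]; auto.
    + destruct (Hlt' n Hl) as [w [Hw Hev]]. apply IHeval in Hev. congruence.
    + match goal with HH : forall m, m < n -> exists v, _ |- _ => destruct (HH v' Hl) as [w [Hw [Hev Hi]]] end. apply Hi in H0'. congruence.
Qed.
Lemma div9_le n k : n <= S k -> n / 9 <= k.
Proof. intro H. destruct n. simpl. lia. assert (S n / 9 < S n) by (apply Nat.div_lt; lia). lia. Qed.

Lemma dec_fuel k1 : forall k2 n, n <= k1 -> n <= k2 -> dec k1 n = dec k2 n.
Proof.
  induction k1 as [|k IH]; intros k2 n H1 H2.
  - assert (n = 0) by lia. subst. destruct k2; reflexivity.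
  - destruct k2 as [|k'].
    + assert (n = 0) by lia. subst. reflexivity.
    + cbn [dec]. pose proof (div9_le n k H1). pose proof (div9_le n k' H2).
      pose proof (p1_le (n/9)). pose proof (p2_le (n/9)).
      destruct (n mod 9) as [|[|[|[|[|[|[|[|[|]]]]]]]]]; try reflexivity;
      f_equal; apply IH; lia.
Qed.

Lemma code_eq c : code c = match c mod 9 with
  | 0 => PZero | 1 => PSucc | 2 => PId | 3 => PFst | 4 => PSnd
  | 5 => PComp (code (p1 (c/9))) (code (p2 (c/9)))
  | 6 => PPair (code (p1 (c/9))) (code (p2 (c/9)))
  | 7 => PPrec (code (p1 (c/9))) (code (p2 (c/9)))
  | _ => PMu (code (c/9)) end.
Proof.
  destruct c as [|k]. reflexivity.
  unfold code. cbn [dec]. pose proof (div9_le (S k) k (le_n _)).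
  pose proof (p1_le (S k/9)). pose proof (p2_le (S k/9)).
  destruct (S k mod 9) as [|[|[|[|[|[|[|[|[|]]]]]]]]]; try reflexivity;
  f_equal; apply dec_fuel; lia.
Qed.

Lemma mod9 m r : r < 9 -> (9 * m + r) mod 9 = r.
Proof. intro. symmetry. apply (Nat.mod_unique _ _ m); lia. Qed.
Lemma div9 m r : r < 9 -> (9 * m + r) / 9 = m.
Proof. intro. symmetry. apply (Nat.div_unique _ _ _ r); lia. Qed.

Definition ccomp a b := 9 * pr a b + 5.
Definition cpair a b := 9 * pr a b + 6.
Definition cprec a b := 9 * pr a b + 7.
Definition cmu a := 9 * a + 8.

Lemma code_ccomp a b : code (ccomp a b) = PComp (code a) (code b).
Proof. rewrite code_eq. unfold ccomp. rewrite mod9, div9 by lia. now rewrite p1_pr, p2_pr. Qed.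
Lemma code_cpair a b : code (cpair a b) = PPair (code a) (code b).
Proof. rewrite code_eq. unfold cpair. rewrite mod9, div9 by lia. now rewrite p1_pr, p2_pr. Qed.
Lemma code_cprec a b : code (cprec a b) = PPrec (code a) (code b).
Proof. rewrite code_eq. unfold cprec. rewrite mod9, div9 by lia. now rewrite p1_pr, p2_pr. Qed.
Lemma code_cmu a : code (cmu a) = PMu (code a).
Proof. rewrite code_eq. unfold cmu. rewrite mod9, div9 by lia. reflexivity. Qed.

Lemma code_surj p : exists c, code c = p.
Proof.
  induction p.
  - exists 0; reflexivity.
  - exists 1; reflexivity.
  - exists 2; reflexivity.
  - exists 3; reflexivity.
  - exists 4; reflexivity.
  - destruct IHp1 as [a <-], IHp2 as [b <-]. exists (ccomp a b). apply code_ccomp.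
  - destruct IHp1 as [a <-], IHp2 as [b <-]. exists (cpair a b). apply code_cpair.
  - destruct IHp1 as [a <-], IHp2 as [b <-]. exists (cprec a b). apply code_cprec.
  - destruct IHp as [a <-]. exists (cmu a). apply code_cmu.
Qed.
Record cf := { cprog : prf; cfn : nat -> nat; cok : forall n, eval cprog n (cfn n) }.

Definition cZero : cf := {| cprog := PZero; cfn := fun _ => 0; cok := ev_zero |}.
Definition cSucc : cf := {| cprog := PSucc; cfn := S; cok := ev_succ |}.
Definition cId : cf := {| cprog := PId; cfn := fun n => n; cok := ev_id |}.
Definition cFst : cf := {| cprog := PFst; cfn := p1; cok := ev_fst |}.
Definition cSnd : cf := {| cprog := PSnd; cfn := p2; cok := ev_snd |}.
Definition cComp (F G : cf) : cf.
Proof. refine {| cprog := PComp (cprog F) (cprog G); cfn := fun n => cfn F (cfn G n) |}.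
  intro n. eapply ev_comp; apply cok. Defined.
Definition cPair (F G : cf) : cf.
Proof. refine {| cprog := PPair (cprog F) (cprog G); cfn := fun n => pr (cfn F n) (cfn G n) |}.
  intro n. eapply ev_pair; apply cok. Defined.
Fixpoint precf (f g : nat -> nat) (a m : nat) : nat :=
  match m with 0 => f a | S k => g (pr a (pr k (precf f g a k))) end.
Definition cPrec (F G : cf) : cf.
Proof. refine {| cprog := PPrec (cprog F) (cprog G); cfn := fun n => precf (cfn F) (cfn G) (p1 n) (p2 n) |}.
  intro n. rewrite <- (pr_p1p2 n) at 1. generalize (p1 n) (p2 n). intros a m.
  induction m; simpl. apply ev_prec0, cok. eapply ev_precS. apply IHm. apply cok. Defined.
Definition cExt (F : cf) (g : nat -> nat) (H : forall n, cfn F n = g n) : cf.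
Proof. refine {| cprog := cprog F; cfn := g |}. intro n. rewrite <- H. apply cok. Defined.

Fixpoint cKraw (c : nat) : cf := match c with 0 => cZero | S k => cComp cSucc (cKraw k) end.
Definition cK (c : nat) : cf.
Proof. refine (cExt (cKraw c) (fun _ => c) _). intro n. induction c; simpl; auto. Defined.

Definition lift2 (B : cf) (op : nat -> nat -> nat) (HB : forall a b, cfn B (pr a b) = op a b)
  (F G : cf) : cf.
Proof. refine (cExt (cComp B (cPair F G)) (fun n => op (cfn F n) (cfn G n)) _).
  intro n. simpl. apply HB. Defined.

Definition c1 (F : cf) := cComp cFst F.
Definition c2 (F : cf) := cComp cSnd F.

Definition addB : cf := cPrec cId (c2 (c2 cSucc)).
Definition sA := cFst.                      (* a in pr a (pr m v) *)
Definition sM := cComp cFst cSnd.           (* m *)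
Definition sV := cComp cSnd cSnd.           (* v *)

Definition cAdd : cf.
Proof. refine (cExt (cPrec cId (cComp cSucc sV)) (fun n => p1 n + p2 n) _).
  intro n. simpl. generalize (p1 n) (p2 n). intros a m. induction m; simpl; auto.
  rewrite !p2_pr, IHm. lia. Defined.
Definition add2 := lift2 cAdd Nat.add (fun a b => ltac:(simpl; rewrite p1_pr, p2_pr; reflexivity)).

Definition cMul : cf.
Proof. refine (cExt (cPrec cZero (add2 sV sA)) (fun n => p1 n * p2 n) _).
  intro n. simpl. generalize (p1 n) (p2 n). intros a m. induction m; simpl; auto.
  rewrite !p2_pr, !p1_pr, IHm. lia. Defined.
Definition mul2 := lift2 cMul Nat.mul (fun a b => ltac:(simpl; rewrite p1_pr, p2_pr; reflexivity)).

Definition cPred : cf.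
Proof. refine (cExt (cComp (cPrec cZero (cComp cFst cSnd)) (cPair cZero cId)) Nat.pred _).
  intro n. simpl. rewrite p2_pr. destruct n; simpl; rewrite ?p2_pr, ?p1_pr; auto. Defined.
Definition cSub : cf.
Proof. refine (cExt (cPrec cId (cComp cPred sV)) (fun n => p1 n - p2 n) _).
  intro n. simpl. generalize (p1 n) (p2 n). intros a m. induction m; simpl; [lia|].
  rewrite !p2_pr. rewrite IHm. lia. Defined.
Definition sub2 := lift2 cSub Nat.sub (fun a b => ltac:(simpl; rewrite p1_pr, p2_pr; reflexivity)).

Definition cIteRaw : cf.
Proof. refine (cExt (cComp (cPrec cSnd (cComp cFst cFst)) (cPair cSnd cFst))
   (fun n => match p1 n with 0 => p2 (p2 n) | _ => p1 (p2 n) end) _).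
  intro n. simpl. rewrite p1_pr, p2_pr. destruct (p1 n); simpl; rewrite ?p1_pr; auto. Defined.

Definition nz (k : nat) : bool := negb (k =? 0).
Lemma nz_b2n b : nz (Nat.b2n b) = b. Proof. destruct b; reflexivity. Qed.
Lemma nz_true k : nz k = true <-> k <> 0. Proof. unfold nz. destruct k; simpl; intuition. Qed.

Definition cIf (C X Y : cf) : cf.
Proof. refine (cExt (cComp cIteRaw (cPair C (cPair X Y)))
   (fun n => if nz (cfn C n) then cfn X n else cfn Y n) _).
  intro n. simpl. rewrite !p1_pr, !p2_pr. destruct (cfn C n); simpl; rewrite ?p1_pr, ?p2_pr; auto. Defined.

Definition cNot (F : cf) : cf.
Proof. refine (cExt (cIf F (cK 0) (cK 1)) (fun n => Nat.b2n (negb (nz (cfn F n)))) _).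
  intro n. simpl. destruct (nz (cfn F n)); reflexivity. Defined.
Definition cAnd (F G : cf) : cf.
Proof. refine (cExt (cIf F (cIf G (cK 1) (cK 0)) (cK 0)) (fun n => Nat.b2n (nz (cfn F n) && nz (cfn G n))) _).
  intro n. simpl. destruct (nz (cfn F n)), (nz (cfn G n)); reflexivity. Defined.
Definition cOr (F G : cf) : cf.
Proof. refine (cExt (cIf F (cK 1) (cIf G (cK 1) (cK 0))) (fun n => Nat.b2n (nz (cfn F n) || nz (cfn G n))) _).
  intro n. simpl. destruct (nz (cfn F n)), (nz (cfn G n)); reflexivity. Defined.
Definition cEq (F G : cf) : cf.
Proof. refine (cExt (cNot (add2 (sub2 F G) (sub2 G F))) (fun n => Nat.b2n (cfn F n =? cfn G n)) _).
  intro n. simpl. unfold nz. f_equal. destruct (Nat.eqb_spec (cfn F n) (cfn G n));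
  destruct (Nat.eqb_spec (cfn F n - cfn G n + (cfn G n - cfn F n)) 0); simpl; auto; lia. Defined.
Definition cLt (F G : cf) : cf.
Proof. refine (cExt (cNot (cNot (sub2 G F))) (fun n => Nat.b2n (cfn F n <? cfn G n)) _).
  intro n. simpl. unfold nz. f_equal. destruct (Nat.ltb_spec (cfn F n) (cfn G n));
  destruct (Nat.eqb_spec (cfn G n - cfn F n) 0); simpl; auto; lia. Defined.

Fixpoint bex (f : nat -> bool) (m : nat) : bool := match m with 0 => false | S k => bex f k || f k end.
Fixpoint ball (f : nat -> bool) (m : nat) : bool := match m with 0 => true | S k => ball f k && f k end.
Lemma bex_spec f m : bex f m = true <-> exists i, i < m /\ f i = true.
Proof. induction m; simpl. split. discriminate. intros [i [Hi _]]; lia.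
  rewrite Bool.orb_true_iff, IHm. split.
  - intros [[i [Hi H]]|H]; exists i || exists m; split; auto; lia.
  - intros [i [Hi H]]. destruct (Nat.eq_dec i m). subst; auto. left; exists i; split; auto; lia. Qed.
Lemma ball_spec f m : ball f m = true <-> forall i, i < m -> f i = true.
Proof. induction m; simpl. split; auto; intros; lia.
  rewrite Bool.andb_true_iff, IHm. split.
  - intros [H1 H2] i Hi. destruct (Nat.eq_dec i m). subst; auto. apply H1; lia.
  - intros H; split; auto. Qed.

Definition cBex (P : cf) : cf.
Proof. refine (cExt (cPrec cZero (cOr sV (cComp P (cPair sA sM))))
  (fun n => Nat.b2n (bex (fun i => nz (cfn P (pr (p1 n) i))) (p2 n))) _).
  intro n. simpl. generalize (p1 n) (p2 n). intros a m. induction m; simpl; auto.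
  rewrite !p2_pr, !p1_pr, IHm, nz_b2n. reflexivity. Defined.
Definition cBall (P : cf) : cf.
Proof. refine (cExt (cPrec (cK 1) (cAnd sV (cComp P (cPair sA sM))))
  (fun n => Nat.b2n (ball (fun i => nz (cfn P (pr (p1 n) i))) (p2 n))) _).
  intro n. simpl. generalize (p1 n) (p2 n). intros a m. induction m; simpl; auto.
  rewrite !p2_pr, !p1_pr, IHm, nz_b2n. reflexivity. Defined.
Lemma divmod_step d m : d <> 0 ->
  pr (S m / d) (S m mod d) = if S (m mod d) =? d then pr (S (m/d)) 0 else pr (m/d) (S (m mod d)).
Proof.
  intro Hd. pose proof (Nat.div_mod m d Hd). pose proof (Nat.mod_upper_bound m d Hd).
  destruct (Nat.eqb_spec (S (m mod d)) d).
  - f_equal. symmetry; apply (Nat.div_unique _ _ _ 0); lia.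
    symmetry; apply (Nat.mod_unique _ _ (S (m/d))); lia.
  - f_equal. symmetry; apply (Nat.div_unique _ _ _ (S (m mod d))); lia.
    symmetry; apply (Nat.mod_unique _ _ (m/d)); lia.
Qed.

Definition cDMraw : cf :=
  cPrec (cK (pr 0 0))
    (cIf (cEq (cComp cSucc (cComp cSnd sV)) sA)
         (cPair (cComp cSucc (cComp cFst sV)) (cK 0))
         (cPair (cComp cFst sV) (cComp cSucc (cComp cSnd sV)))).
Lemma cDMraw_spec d a : d <> 0 -> cfn cDMraw (pr d a) = pr (a / d) (a mod d).
Proof.
  intro Hd. simpl. rewrite p1_pr, p2_pr. induction a.
  - simpl. rewrite Nat.div_0_l, Nat.mod_0_l by auto. reflexivity.
  - simpl. rewrite IHa. repeat rewrite ?p1_pr, ?p2_pr. rewrite nz_b2n, divmod_step by auto. destruct d; [lia|]. reflexivity.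

Qed.

Definition cPow2 : cf.
Proof. refine (cExt (cComp (cPrec (cK 1) (add2 sV sV)) (cPair cZero cId)) (fun n => 2 ^ n) _).
  intro n. simpl. rewrite p1_pr, p2_pr. induction n; simpl; auto. rewrite !p2_pr, IHn. lia. Defined.

Definition cDiv9 : cf.
Proof. refine (cExt (cComp cFst (cComp cDMraw (cPair (cK 9) cId))) (fun n => n / 9) _).
  intro n. cbn [cfn cComp cPair cK cExt cFst cSnd cId]. rewrite cDMraw_spec, p1_pr by lia. reflexivity. Defined.
Definition cMod9 : cf.
Proof. refine (cExt (cComp cSnd (cComp cDMraw (cPair (cK 9) cId))) (fun n => n mod 9) _).
  intro n. cbn [cfn cComp cPair cK cExt cFst cSnd cId]. rewrite cDMraw_spec, p2_pr by lia. reflexivity. Defined.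

Definition cTb : cf.
Proof. refine (cExt (cComp cSnd (cComp cDMraw (cPair (cK 2)
     (cComp cFst (cComp cDMraw (cPair (cComp cPow2 cSnd) cFst))))))
   (fun n => Nat.b2n (Nat.testbit (p1 n) (p2 n))) _).
  intro n. cbn [cfn cComp cPair cK cExt cFst cSnd cId]. rewrite (cDMraw_spec (2 ^ p2 n)). rewrite p1_pr, cDMraw_spec, p2_pr by lia.
  rewrite Nat.testbit_spec'. reflexivity. apply Nat.pow_nonzero; lia. Defined.
Definition mem (Z t : nat) : Prop := Nat.testbit Z t = true.
Definition tc c x v := pr c (pr x v).

Lemma mem_lt Z t : mem Z t -> t < Z.
Proof. unfold mem. intro H. pose proof (Nat.testbit_spec' Z t). rewrite H in H0. simpl in H0.
  destruct (Nat.eq_dec (Z / 2 ^ t) 0) as [E|E]. rewrite E in H0. simpl in H0. discriminate.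
  pose proof (Nat.pow_nonzero 2 t ltac:(lia)).
  assert (2 ^ t <= Z). { destruct (Nat.le_gt_cases (2^t) Z); auto. rewrite Nat.div_small in E; lia. }
  pose proof (Nat.pow_gt_lin_r 2 t ltac:(lia)). lia. Qed.

Lemma tc_ge c x v : c <= tc c x v /\ x <= tc c x v /\ v <= tc c x v.
Proof. unfold tc. pose proof (pr_ge c (pr x v)). pose proof (pr_ge x v). lia. Qed.

Lemma mem_lor S1 S2 t : mem (Nat.lor S1 S2) t <-> mem S1 t \/ mem S2 t.
Proof. unfold mem. rewrite Nat.lor_spec. apply Bool.orb_true_iff. Qed.
Lemma mem_pow2 t i : mem (2 ^ t) i <-> i = t.
Proof. unfold mem. rewrite Nat.pow2_bits_eqb. rewrite Nat.eqb_eq. intuition. Qed.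

Definition just (Z t : nat) : Prop :=
  let c := p1 t in let x := p1 (p2 t) in let v := p2 (p2 t) in let m := c / 9 in
  match c mod 9 with
  | 0 => v = 0 | 1 => v = Datatypes.S x | 2 => v = x | 3 => v = p1 x | 4 => v = p2 x
  | 5 => exists y, mem Z (tc (p2 m) x y) /\ mem Z (tc (p1 m) y v)
  | 6 => mem Z (tc (p1 m) x (p1 v)) /\ mem Z (tc (p2 m) x (p2 v))
  | 7 => match p2 x with
         | 0 => mem Z (tc (p1 m) (p1 x) v)
         | Datatypes.S n => exists w, mem Z (tc c (pr (p1 x) n) w) /\ mem Z (tc (p2 m) (pr (p1 x) (pr n w)) v)
         end
  | _ => mem Z (tc m (pr x v) 0) /\ forall j, j < v -> exists w, w <> 0 /\ mem Z (tc m (pr x j) w)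
  end.
Definition justified Z := forall t, mem Z t -> just Z t.

Lemma just_mono Z Z' t : (forall i, mem Z i -> mem Z' i) -> just Z t -> just Z' t.
Proof.
  intros HS. unfold just. cbv zeta. destruct (p1 t mod 9) as [|[|[|[|[|[|[|[|[|]]]]]]]]]; auto.
  - intros [y [H1 H2]]; eauto.
  - intros [H1 H2]; eauto.
  - destruct (p2 (p1 (p2 t))); auto. intros [w [H1 H2]]; eauto.
  - intros [H1 H2]; split; auto. intros j Hj. destruct (H2 j Hj) as [w [? ?]]; eauto.
  - intros [H1 H2]; split; auto. intros j Hj. destruct (H2 j Hj) as [w [? ?]]; eauto.
Qed.

Lemma justified_lor S1 S2 : justified S1 -> justified S2 -> justified (Nat.lor S1 S2).
Proof. intros H1 H2 t Ht. apply mem_lor in Ht as [Ht|Ht].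
  - apply (just_mono S1); auto. intros; apply mem_lor; auto.
  - apply (just_mono S2); auto. intros; apply mem_lor; auto. Qed.

Lemma justified_add Z t : justified Z -> just Z t -> justified (Nat.lor Z (2 ^ t)).
Proof. intros H1 H2 i Hi. assert (Hm : forall j, mem Z j -> mem (Nat.lor Z (2^t)) j) by (intros; apply mem_lor; auto).
  apply mem_lor in Hi as [Hi|Hi].
  - apply (just_mono Z); auto.
  - apply mem_pow2 in Hi. subst. apply (just_mono Z); auto. Qed.

Lemma lt_code c : 5 <= c mod 9 -> c / 9 < c /\ p1 (c/9) < c /\ p2 (c/9) < c.
Proof. intros H. assert (c <> 0) by (intro; subst; simpl in H; lia).
  assert (c / 9 < c) by (apply Nat.div_lt; lia). pose proof (p1_le (c/9)). pose proof (p2_le (c/9)). lia. Qed.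

Lemma sound Z : justified Z -> forall c x v, mem Z (tc c x v) -> eval (code c) x v.
Proof.
  intro HS. intro c. induction c as [c IHc] using (well_founded_induction lt_wf).
  intro x. induction x as [x IHx] using (well_founded_induction lt_wf).
  intros v Hm. pose proof (HS _ Hm) as Hj. unfold just, tc in Hj. cbv zeta in Hj. repeat rewrite ?p1_pr, ?p2_pr in Hj.
  rewrite code_eq. destruct (c mod 9) as [|[|[|[|[|[|[|[|[|]]]]]]]]] eqn:E; subst.
  - constructor. - constructor. - constructor. - constructor. - constructor.
  - destruct Hj as [y [H1 H2]]. pose proof (lt_code c ltac:(lia)).
    eapply ev_comp; eapply IHc; eauto; lia.
  - destruct Hj as [H1 H2]. pose proof (lt_code c ltac:(lia)).
    rewrite <- (pr_p1p2 v). eapply ev_pair; eapply IHc; eauto; lia.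
  - pose proof (lt_code c ltac:(lia)). rewrite <- (pr_p1p2 x) in *.
    rewrite !p1_pr, !p2_pr in Hj. destruct (p2 x) as [|n] eqn:En.
    + apply ev_prec0. eapply IHc; eauto; lia.
    + destruct Hj as [w [H1 H2]]. eapply ev_precS.
      * assert (Hx : eval (code c) (pr (p1 x) n) w). { apply IHx; auto. apply pr_lt_S. }
        rewrite code_eq, E in Hx. exact Hx.
      * eapply IHc; eauto; lia.
  - destruct Hj as [H1 H2]; pose proof (lt_code c ltac:(lia));
    apply ev_mu; [eapply IHc; eauto; lia|];
    intros j Hj; destruct (H2 j Hj) as [w [Hw Hm']]; exists w; split; auto; eapply IHc; eauto; lia.
  - destruct Hj as [H1 H2]; pose proof (lt_code c ltac:(lia));
    apply ev_mu; [eapply IHc; eauto; lia|];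
    intros j Hj; destruct (H2 j Hj) as [w [Hw Hm']]; exists w; split; auto; eapply IHc; eauto; lia.
Qed.
Lemma code_inv c p : code c = p -> match p with
  | PZero => c mod 9 = 0 | PSucc => c mod 9 = 1 | PId => c mod 9 = 2 | PFst => c mod 9 = 3
  | PSnd => c mod 9 = 4
  | PComp f g => c mod 9 = 5 /\ f = code (p1 (c/9)) /\ g = code (p2 (c/9))
  | PPair f g => c mod 9 = 6 /\ f = code (p1 (c/9)) /\ g = code (p2 (c/9))
  | PPrec f g => c mod 9 = 7 /\ f = code (p1 (c/9)) /\ g = code (p2 (c/9))
  | PMu f => c mod 9 = 8 /\ f = code (c/9) end.
Proof. intro H. rewrite code_eq in H. pose proof (Nat.mod_upper_bound c 9 ltac:(lia)).
  destruct (c mod 9) as [|[|[|[|[|[|[|[|[|]]]]]]]]]; subst; auto; lia. Qed.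

Lemma justified_0 : justified 0.
Proof. intros t H. unfold mem in H. rewrite Nat.bits_0 in H. discriminate. Qed.

Lemma finish Z t : justified Z -> just Z t -> exists Z', justified Z' /\ mem Z' t.
Proof. intros. exists (Nat.lor Z (2^t)). split. apply justified_add; auto.
  apply mem_lor. right. apply mem_pow2. auto. Qed.

Lemma union_many (Q : nat -> nat -> Prop) :
  (forall m Z Z', Q m Z -> (forall i, mem Z i -> mem Z' i) -> Q m Z') ->
  forall n, (forall m, m < n -> exists Z, justified Z /\ Q m Z) ->
  exists Z, justified Z /\ forall m, m < n -> Q m Z.
Proof. intros HQ n. induction n; intros H.
  - exists 0. split. apply justified_0. intros; lia.
  - destruct IHn as [Z1 [J1 H1]]. intros; apply H; lia.
    destruct (H n ltac:(lia)) as [Z2 [J2 H2]].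
    exists (Nat.lor Z1 Z2). split. apply justified_lor; auto.
    intros m Hm. destruct (Nat.eq_dec m n).
    + subst. apply (HQ _ Z2); auto. intros; apply mem_lor; auto.
    + apply (HQ _ Z1); auto. apply H1; lia. intros; apply mem_lor; auto. Qed.

Ltac just_unfold := unfold just, tc; cbv zeta; repeat rewrite ?p1_pr, ?p2_pr.

Lemma complete p x v : eval p x v -> forall c, code c = p -> exists Z, justified Z /\ mem Z (tc c x v).
Proof.
  intro H. induction H using eval_ind'; intros c Hc; apply code_inv in Hc.
  all: try (apply (finish 0); [apply justified_0|]; just_unfold; rewrite Hc; reflexivity).
  - destruct Hc as [E [-> ->]].
    destruct (IHeval1 _ eq_refl) as [Z1 [J1 M1]]. destruct (IHeval2 _ eq_refl) as [Z2 [J2 M2]].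
    apply (finish (Nat.lor Z1 Z2)). apply justified_lor; auto.
    just_unfold. rewrite E. exists y. split; apply mem_lor; auto.
  - destruct Hc as [E [-> ->]].
    destruct (IHeval1 _ eq_refl) as [Z1 [J1 M1]]. destruct (IHeval2 _ eq_refl) as [Z2 [J2 M2]].
    apply (finish (Nat.lor Z1 Z2)). apply justified_lor; auto.
    just_unfold. rewrite E. split; apply mem_lor; auto.
  - destruct Hc as [E [-> ->]].
    destruct (IHeval _ eq_refl) as [Z1 [J1 M1]].
    apply (finish Z1). auto.
    just_unfold. rewrite E. auto.
  - destruct Hc as [E [-> ->]].
    destruct (IHeval1 c) as [Z1 [J1 M1]]. rewrite code_eq, E; auto.
    destruct (IHeval2 _ eq_refl) as [Z2 [J2 M2]].
    apply (finish (Nat.lor Z1 Z2)). apply justified_lor; auto.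
    just_unfold. rewrite E. exists v. split; apply mem_lor; auto.
  - destruct Hc as [E ->].
    destruct (IHeval _ eq_refl) as [Z1 [J1 M1]].
    destruct (union_many (fun m Z => exists w, w <> 0 /\ mem Z (tc (c/9) (pr x m) w))) with (n := n)
      as [Z2 [J2 M2]].
    + intros m Z Z' [w [Hw Hm]] HZ. eauto.
    + intros m Hm. match goal with HH : forall m, m < n -> exists v, _ |- _ => destruct (HH m Hm) as [w [Hw [_ Hi]]] end. destruct (Hi _ eq_refl) as [Z [J M]].
      exists Z. split; auto. eauto.
    + apply (finish (Nat.lor Z1 Z2)). apply justified_lor; auto.
      just_unfold. rewrite E. split. apply mem_lor; auto.
      intros j Hj. destruct (M2 j Hj) as [w [Hw Hm]]. exists w. split; auto. apply mem_lor; auto.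
Qed.

Definition gZ E := cComp cFst E.
Definition gt E := cComp cSnd E.
Definition gc E := cComp cFst (gt E).
Definition gx E := cComp cFst (cComp cSnd (gt E)).
Definition gv E := cComp cSnd (cComp cSnd (gt E)).
Definition gm E := cComp cDiv9 (gc E).
Definition gr E := cComp cMod9 (gc E).
Definition memC Zf Cf Xf Vf := cComp cTb (cPair Zf (cPair Cf (cPair Xf Vf))).

Definition b5 E := cComp (cBex (
   cAnd (memC (gZ cFst) (cComp cSnd (gm cFst)) (gx cFst) cSnd)
        (memC (gZ cFst) (cComp cFst (gm cFst)) cSnd (gv cFst)))) (cPair E (gZ E)).
Definition b6 E := cAnd (memC (gZ E) (cComp cFst (gm E)) (gx E) (cComp cFst (gv E)))
                        (memC (gZ E) (cComp cSnd (gm E)) (gx E) (cComp cSnd (gv E))).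
Definition b7 E :=
  cIf (cComp cSnd (gx E))
    (cComp (cBex (
       cAnd (memC (gZ cFst) (gc cFst) (cPair (cComp cFst (gx cFst)) (cComp cPred (cComp cSnd (gx cFst)))) cSnd)
            (memC (gZ cFst) (cComp cSnd (gm cFst))
                (cPair (cComp cFst (gx cFst)) (cPair (cComp cPred (cComp cSnd (gx cFst))) cSnd)) (gv cFst))))
       (cPair E (gZ E)))
    (memC (gZ E) (cComp cFst (gm E)) (cComp cFst (gx E)) (gv E)).
Definition E2 := cComp cFst cFst.
Definition b8 E :=
  cAnd (memC (gZ E) (gm E) (cPair (gx E) (gv E)) (cK 0))
       (cComp (cBall (cComp (cBex (
            cAnd (cNot (cEq cSnd (cK 0)))
                 (memC (gZ E2) (gm E2) (cPair (gx E2) (cComp cSnd cFst)) cSnd)))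
          (cPair cId (gZ cFst)))) (cPair E (gv E))).
Definition JustC :=
  let E := cId in
  cIf (cEq (gr E) (cK 0)) (cEq (gv E) (cK 0))
 (cIf (cEq (gr E) (cK 1)) (cEq (gv E) (cComp cSucc (gx E)))
 (cIf (cEq (gr E) (cK 2)) (cEq (gv E) (gx E))
 (cIf (cEq (gr E) (cK 3)) (cEq (gv E) (cComp cFst (gx E)))
 (cIf (cEq (gr E) (cK 4)) (cEq (gv E) (cComp cSnd (gx E)))
 (cIf (cEq (gr E) (cK 5)) (b5 E)
 (cIf (cEq (gr E) (cK 6)) (b6 E)
 (cIf (cEq (gr E) (cK 7)) (b7 E) (b8 E)))))))).

#[export] Instance bex_proper : Proper (pointwise_relation nat eq ==> eq ==> eq) bex.
Proof. intros f g H m m' <-. induction m; simpl; auto. rewrite IHm, H. auto. Qed.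
#[export] Instance ball_proper : Proper (pointwise_relation nat eq ==> eq ==> eq) ball.
Proof. intros f g H m m' <-. induction m; simpl; auto. rewrite IHm, H. auto. Qed.

Lemma bex_unb f m : (forall i, f i = true -> i < m) -> (bex f m = true <-> exists i, f i = true).
Proof. intro H. rewrite bex_spec. split. intros [i [_ Hi]]; eauto. intros [i Hi]; eauto. Qed.

Lemma mem_tc_lt Z c x v : Nat.testbit Z (pr c (pr x v)) = true -> c < Z /\ x < Z /\ v < Z.
Proof. intro H. apply mem_lt in H. pose proof (tc_ge c x v). unfold tc in H0. lia. Qed.

Ltac cfsimpl := cbn [cfn cIf cAnd cOr cNot cEq cLt cComp cPair cFst cSnd cId cK cExt cBex cBall cTb cDiv9 cMod9 cPred
   gZ gt gc gx gv gm gr memC b5 b6 b7 b8 E2 JustC lift2 cSucc].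

Ltac mu_case := rewrite Bool.andb_true_iff, ball_spec; apply and_iff_compat_l;
    split; intros H j Hj; specialize (H j Hj);
    [ apply bex_spec in H as [w [_ Hw]]; apply Bool.andb_true_iff in Hw as [Hw1 Hw2];
      exists w; split; auto; apply Bool.negb_true_iff, Nat.eqb_neq in Hw1; auto
    | destruct H as [w [Hw1 Hw2]]; apply bex_spec; exists w; split;
      [ apply mem_tc_lt in Hw2; lia | apply Bool.andb_true_iff; split; auto;
        apply Bool.negb_true_iff, Nat.eqb_neq; auto ] ].

Lemma JustC_spec Z t : nz (cfn JustC (pr Z t)) = true <-> just Z t.
Proof.
  cfsimpl. repeat rewrite ?p1_pr, ?p2_pr.
  unfold just. cbv zeta.
  destruct (p1 t mod 9) as [|[|[|[|[|[|[|[|[|]]]]]]]]]; cbn -[Nat.modulo Nat.div]; repeat setoid_rewrite nz_b2n; repeat setoid_rewrite p1_pr; repeat setoid_rewrite p2_pr.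
  all: unfold mem, tc.
  1-5: apply Nat.eqb_eq.
  - rewrite bex_unb. setoid_rewrite Bool.andb_true_iff. reflexivity.
    intros i Hi. apply Bool.andb_true_iff in Hi as [H1 H2]. apply mem_tc_lt in H1. lia.
  - rewrite Bool.andb_true_iff. reflexivity.
  - destruct (p2 (p1 (p2 t))) as [|n]; simpl; rewrite nz_b2n; [reflexivity|].
    rewrite bex_unb. setoid_rewrite Bool.andb_true_iff. reflexivity.
    intros i Hi. apply Bool.andb_true_iff in Hi as [H1 H2]. apply mem_tc_lt in H1. lia.
  - mu_case.
  - mu_case.
Qed.

Lemma mu_eval (F : cf) x n : eval (PMu (cprog F)) x n <-> cfn F (pr x n) = 0 /\ forall m, m < n -> cfn F (pr x m) <> 0.
Proof. split.
  - intro H. apply inv_mu in H as [H1 H2]. split.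
    + symmetry. eapply eval_det; [exact H1| apply cok].
    + intros m Hm. destruct (H2 m Hm) as [w [Hw Hev]]. intro E. apply Hw.
      rewrite (eval_det _ _ _ Hev _ (cok F _)). auto.
  - intros [H1 H2]. apply ev_mu. rewrite <- H1. apply cok.
    intros m Hm. exists (cfn F (pr x m)). split; auto. apply cok. Qed.

Lemma least_zero (f : nat -> nat) N : f N = 0 -> exists n, f n = 0 /\ forall m, m < n -> f m <> 0.
Proof. induction N as [N IH] using (well_founded_induction lt_wf). intro H.
  destruct (bex (fun i => f i =? 0) N) eqn:E.
  - apply bex_spec in E as [i [Hi Ei]]. apply Nat.eqb_eq in Ei. eauto.
  - exists N. split; auto. intros m Hm Em. assert (bex (fun i => f i =? 0) N = true).
    apply bex_spec. exists m. split; auto. apply Nat.eqb_eq; auto. congruence. Qed.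

Lemma mu_dom (F : cf) x : (exists n, eval (PMu (cprog F)) x n) <-> exists n, cfn F (pr x n) = 0.
Proof. split.
  - intros [n H]. apply mu_eval in H as [H _]. eauto.
  - intros [N H]. destruct (least_zero (fun n => cfn F (pr x n)) N H) as [n Hn]. exists n. apply mu_eval. auto. Qed.

Definition ChkC : cf :=
  cAnd (cComp (cBex (memC (cComp cSnd cFst) (cComp cFst (cComp cFst cFst)) (cComp cSnd (cComp cFst cFst)) cSnd))
              (cPair cId cSnd))
       (cComp (cBall (cOr (cNot (cComp cTb (cPair (cComp cSnd cFst) cSnd)))
                          (cComp JustC (cPair (cComp cSnd cFst) cSnd))))
              (cPair cId cSnd)).
Definition NChk := cNot ChkC.

Lemma NChk_spec c b Z : cfn NChk (pr (pr c b) Z) = 0 <-> (exists v, mem Z (tc c b v)) /\ justified Z.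
Proof.
  unfold NChk, ChkC. cbn [cfn cNot cAnd cOr cComp cPair cFst cSnd cId cBex cBall cExt cTb memC].
  repeat setoid_rewrite p1_pr. repeat setoid_rewrite p2_pr. repeat setoid_rewrite nz_b2n.
  assert (B0 : forall b, Nat.b2n b = 0 <-> b = false) by (intros []; simpl; intuition discriminate).
  rewrite B0, Bool.negb_false_iff, Bool.andb_true_iff, bex_unb, ball_spec.
  2:{ intros i Hi. apply mem_tc_lt in Hi. lia. }
  apply and_iff_compat_l. unfold justified. split.
  - intros H t Ht. rewrite <- JustC_spec. pose proof (mem_lt _ _ Ht).
    specialize (H t H0). apply Bool.orb_true_iff in H as [H|H]; auto.
    unfold mem in Ht. rewrite Ht in H. discriminate.
  - intros H t Ht. apply Bool.orb_true_iff. destruct (Nat.testbit Z t) eqn:E; [right|left; reflexivity].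
    apply JustC_spec, H. exact E.
Qed.

Definition Uprog := PMu (cprog NChk).
Lemma U_spec c b : (exists v, eval Uprog (pr c b) v) <-> W c b.
Proof. unfold Uprog. rewrite mu_dom. setoid_rewrite NChk_spec. unfold W. split.
  - intros [Z [[v Hv] J]]. exists v. eapply sound; eauto.
  - intros [v Hv]. destruct (complete _ _ _ Hv c eq_refl) as [Z [J M]]. exists Z; eauto. Qed.

Fixpoint Kc (k : nat) : nat := match k with 0 => 0 | S k' => ccomp 1 (Kc k') end.
Lemma code_Kc k : code (Kc k) = cprog (cKraw k).
Proof. induction k; simpl. reflexivity. unfold ccomp. rewrite <- IHk. apply (code_ccomp 1 (Kc k)). Qed.

Definition ccompC (A B : cf) : cf.
Proof. refine (cExt (add2 (mul2 (cK 9) (cPair A B)) (cK 5)) (fun n => ccomp (cfn A n) (cfn B n)) _).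
  intro n. reflexivity. Defined.
Definition cpairC (A B : cf) : cf.
Proof. refine (cExt (add2 (mul2 (cK 9) (cPair A B)) (cK 6)) (fun n => cpair (cfn A n) (cfn B n)) _).
  intro n. reflexivity. Defined.

Definition KcC : cf.
Proof. refine (cExt (cComp (cPrec cZero (ccompC (cK 1) sV)) (cPair cZero cId)) Kc _).
  intro n. cbn [cfn cComp cPair cZero cId cExt cPrec]. rewrite p1_pr, p2_pr.
  induction n; [reflexivity|]. cbn [precf]. cbn [cfn ccompC cExt cK sV cComp cSnd] in *. rewrite !p2_pr, IHn. reflexivity.
Defined.

Lemma cok_eq (F : cf) n v : cfn F n = v -> eval (cprog F) n v.
Proof. intros <-. apply cok. Qed.

Definition Gp := PMu PFst.
Lemma Gp_eval y v : eval Gp y v <-> y = 0 /\ v = 0.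
Proof. unfold Gp. rewrite (mu_eval cFst y v). cbn [cfn cFst]. setoid_rewrite p1_pr. split.
  - intros [H1 H2]. split; auto. destruct v; auto. exfalso. apply (H2 0). lia. auto.
  - intros [-> ->]. split; auto. intros; lia. Qed.

Lemma cKraw_val k n : cfn (cKraw k) n = k.
Proof. induction k; simpl; auto. Qed.

Definition DC := cNot (cEq cFst cSnd).
Definition Sk k := PComp Gp (PComp (cprog DC) (PPair PId (cprog (cKraw k)))).
Lemma Sk_dom k n : (exists v, eval (Sk k) n v) <-> n = k.
Proof. split.
  - intros [v H]. apply inv_comp in H as [y1 [H1 H2]]. apply Gp_eval in H2 as [-> ->].
    apply inv_comp in H1 as [y2 [H3 H4]]. apply inv_pair in H3 as [a [b [-> [Ha Hb]]]].
    apply inv_id in Ha. subst. rewrite (eval_det _ _ _ Hb _ (cok _ _)), cKraw_val in H4.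
    pose proof (eval_det _ _ _ H4 _ (cok _ _)) as E. cbn [cfn DC cNot cEq cExt cFst cSnd] in E.
    rewrite p1_pr, p2_pr in E. destruct (Nat.eqb_spec n k); auto. discriminate.
  - intros ->. exists 0. eapply ev_comp; [|apply Gp_eval; auto].
    eapply ev_comp. eapply ev_pair. apply ev_id. apply cok.
    rewrite cKraw_val. apply cok_eq.
    cbn [cfn DC cNot cEq cExt cFst cSnd]. rewrite p1_pr, p2_pr, Nat.eqb_refl. reflexivity.
Qed.

Lemma singleton_index : exists E : nat -> nat, recursive_fun E /\ forall k n, W (E k) n <-> n = k.
Proof.
  destruct (code_surj Gp) as [g Hg]. destruct (code_surj (cprog DC)) as [d Hd].
  exists (fun k => ccomp g (ccomp d (cpair 2 (Kc k)))). split.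
  - exists (cprog (ccompC (cK g) (ccompC (cK d) (cpairC (cK 2) KcC)))). intro n. apply cok.
  - intros k n. unfold W. rewrite code_ccomp, code_ccomp, code_cpair, code_Kc, Hg, Hd.
    apply (Sk_dom k n).
Qed.


Definition Jset (A : nat -> Prop) : nat -> Prop := fun e => exists k, W e k /\ A k.

Definition LogC := cNot (cEq (cComp cPow2 cSnd) (cComp cSnd cFst)).
Lemma LogC_val n b : cfn LogC (pr n b) = Nat.b2n (negb (2 ^ b =? p2 n)).
Proof. cbn [cfn LogC cNot cEq cExt cComp cPow2 cSnd cFst]. rewrite p1_pr, p2_pr. destruct (2 ^ b =? p2 n); reflexivity. Qed.

Lemma dir2 (A B : nat -> Prop) : one_red (Jset A) (Jset B) -> e_red A B.
Proof.
  intros [h [[f Hf] [Hinj Hiff]]]. destruct singleton_index as [E [[fe Hfe] HE]].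
  exists (fun n => exists b, p2 n = 2 ^ b /\ W (h (E (p1 n))) b). split.
  - exists (PComp Uprog (PPair (PComp f (PComp fe PFst)) (PMu (cprog LogC)))). intro n. split.
    + intros [b [Hb HW]]. apply U_spec in HW as [v Hv]. exists v. eapply ev_comp; [|exact Hv].
      apply ev_pair. eapply ev_comp; [|apply Hf]. eapply ev_comp; [apply ev_fst|apply Hfe].
      apply mu_eval. rewrite LogC_val. split.
      * rewrite Hb, Nat.eqb_refl. reflexivity.
      * intros m Hm. rewrite LogC_val, Hb. destruct (Nat.eqb_spec (2^m) (2^b)); [|discriminate].
        apply Nat.pow_inj_r in e; lia.
    + intros [v Hv]. apply inv_comp in Hv as [y [H1 H2]]. apply inv_pair in H1 as [a [b [-> [Ha Hb]]]].
      apply inv_comp in Ha as [z [Hz1 Hz2]]. apply inv_comp in Hz1 as [w [Hw1 Hw2]]. apply inv_fst in Hw1. subst.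
      rewrite (eval_det _ _ _ Hw2 _ (Hfe _)) in Hz2. rewrite (eval_det _ _ _ Hz2 _ (Hf _)) in H2.
      apply mu_eval in Hb as [Hb _]. rewrite LogC_val in Hb.
      exists b. split. destruct (Nat.eqb_spec (2^b) (p2 n)); auto. discriminate.
      apply U_spec. eauto.
  - intro k. transitivity (Jset A (E k)).
    { unfold Jset. split. intro; exists k; split; auto. apply HE; auto.
      intros [k' [H1 H2]]. apply HE in H1. subst. auto. }
    rewrite Hiff. unfold Jset. split.
    + intros [b [Hb HB]]. exists (2 ^ b). split.
      * exists b. rewrite p1_pr, p2_pr. auto.
      * intros i Hi. unfold canon_fin in Hi. rewrite Nat.pow2_bits_eqb in Hi. apply Nat.eqb_eq in Hi. subst. auto.
    + intros [u [[b [Hb HW]] HB]]. rewrite p1_pr, p2_pr in *. subst. exists b. split; auto.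
      apply HB. unfold canon_fin. rewrite Nat.pow2_bits_eqb. apply Nat.eqb_refl.
Qed.

Section Chk.
Variable RL : cf.

Definition nS := cComp cSnd cId.
Definition nP := cComp cFst (cComp cSnd cId).
Definition nSs := cComp cFst nP.
Definition nK := cComp cFst (cComp cSnd nP).
Definition nU := cComp cSnd (cComp cSnd nP).
Definition oN := cFst.   (* outer n in body input pr n i *)
Definition iI := cSnd.
Definition bC := cComp cSucc (cComp cFst (cComp cSnd iI)).
Definition bD := cComp cSucc (cComp cSnd (cComp cSnd iI)).
Definition bS1 := cComp cSucc (cComp nSs oN).
Definition bR' := cPair (cComp cPred (sub2 (mul2 bC bS1) bD)) (cComp cPred (mul2 bD bS1)).
Definition body :=
  cOr (cNot (cComp cTb (cPair (cComp nU oN) iI)))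
      (cAnd (cLt bD (mul2 bC bS1))
            (cNot (cComp RL (cPair (cComp cFst iI) (cPair (cComp cFst oN) bR'))))).
Definition ChkA := cEq (cComp cSucc (cComp cSnd nS)) (mul2 (cComp cSucc nP) (cComp cSucc nSs)).
Definition ChkB := cComp (cBall body) (cPair cId nU).
Definition NotChk := cNot (cAnd ChkA ChkB).

Definition ChkP (n : nat) : Prop :=
  let j := p1 n in let r := p2 n in let p := p1 r in let s := p1 p in let u := p2 (p2 p) in
  S (p2 r) = S p * S s /\
  forall i, Nat.testbit u i = true ->
    let c := S (p1 (p2 i)) in let d := S (p2 (p2 i)) in
    d < c * S s /\ cfn RL (pr (p1 i) (pr j (pr (c * S s - d - 1) (d * S s - 1)))) = 0.

Lemma NotChk_spec n : cfn NotChk n = 0 <-> ChkP n.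
Proof.
  unfold NotChk, ChkA, ChkB, body, ChkP.
  cbn [cfn cNot cAnd cOr cEq cLt cComp cPair cFst cSnd cId cBall cExt cTb lift2 mul2 sub2 cPred cSucc
       nS nP nSs nK nU oN iI bC bD bS1 bR'].
  repeat setoid_rewrite p1_pr. repeat setoid_rewrite p2_pr. repeat setoid_rewrite nz_b2n.
  assert (B0 : forall b, Nat.b2n b = 0 <-> b = false) by (intros []; simpl; intuition discriminate).
  rewrite B0, Bool.negb_false_iff, Bool.andb_true_iff, Nat.eqb_eq, ball_spec.
  apply and_iff_compat_l. repeat setoid_rewrite <- Nat.sub_1_r.
  split.
  - intros H i Hi. pose proof (mem_lt _ _ Hi). specialize (H i H0). rewrite Hi in H. simpl in H.
    apply Bool.andb_true_iff in H as [H1 H2]. apply Nat.ltb_lt in H1. split; auto.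
    unfold nz in H2. rewrite Bool.negb_involutive in H2. apply Nat.eqb_eq in H2. auto.
  - intros H i _. destruct (Nat.testbit _ i) eqn:E; [|reflexivity]. cbn [negb orb].
    destruct (H i E) as [H1 H2]. apply Bool.andb_true_iff. split. apply Nat.ltb_lt; auto.
    unfold nz. rewrite H2. reflexivity.
Qed.
End Chk.

Lemma ccomp_inj a b a' b' : ccomp a b = ccomp a' b' -> a = a' /\ b = b'.
Proof. unfold ccomp. intro H. apply pr_inj. lia. Qed.
Lemma cpair_inj a b a' b' : cpair a b = cpair a' b' -> a = a' /\ b = b'.
Proof. unfold cpair. intro H. apply pr_inj. lia. Qed.

Definition kof n := p1 (p2 (p1 (p2 n))).
Definition uof n := p2 (p2 (p1 (p2 n))).

Lemma dir1_index (RL : cf) (F : prf) : exists h : nat -> nat, recursive_fun h /\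
  (forall m n, h m = h n -> m = n) /\
  forall e n, W (h e) n <-> ChkP RL n /\ W e (kof n) /\ exists v, eval F (pr (kof n) (uof n)) v.
Proof.
  destruct (code_surj Gp) as [g Hg]. destruct (code_surj (cprog (NotChk RL))) as [a Ha].
  destruct (code_surj (cprog nK)) as [b Hb]. destruct (code_surj F) as [f' Hf'].
  destruct (code_surj (cprog (cPair nK nU))) as [c' Hc'].
  exists (fun e => ccomp 4 (cpair (ccomp g a) (cpair (ccomp e b) (ccomp f' c')))). split; [|split].
  - exists (cprog (ccompC (cK 4) (cpairC (ccompC (cK g) (cK a)) (cpairC (ccompC cId (cK b)) (ccompC (cK f') (cK c')))))).
    intro n. apply cok.
  - intros m n H. apply ccomp_inj in H as [_ H]. apply cpair_inj in H as [_ H].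
    apply cpair_inj in H as [H _]. apply ccomp_inj in H as [H _]. auto.
  - intros e n. unfold W. repeat rewrite ?code_ccomp, ?code_cpair. rewrite Hg, Ha, Hb, Hf', Hc'.
    change (code 4) with PSnd. split.
    + intros [v H]. apply inv_comp in H as [y [H1 H2]]. apply inv_pair in H1 as [y1 [y2 [-> [H3 H4]]]].
      apply inv_comp in H3 as [z [Hz1 Hz2]]. apply Gp_eval in Hz2 as [-> _].
      apply inv_pair in H4 as [w1 [w2 [-> [H5 H6]]]].
      apply inv_comp in H5 as [z1 [Hz3 Hz4]]. apply inv_comp in H6 as [z2 [Hz5 Hz6]].
      rewrite (eval_det _ _ _ Hz3 _ (cok _ _)) in Hz4. rewrite (eval_det _ _ _ Hz5 _ (cok _ _)) in Hz6.
      split; [apply NotChk_spec; symmetry; eapply eval_det; [exact Hz1|apply cok]|]. split; eauto.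
    + intros [H1 [[v1 H2] [v2 H3]]]. exists (p2 (pr 0 (pr v1 v2))). apply ev_comp with (y := pr 0 (pr v1 v2)); [|apply ev_snd].
      apply ev_pair. eapply ev_comp; [apply cok|]. apply NotChk_spec in H1. rewrite H1. apply Gp_eval; auto.
      apply ev_pair; eapply ev_comp; [apply cok| exact H2 | apply cok | exact H3].
Qed.
Open Scope R_scope.

Lemma q_pr a b : q (pr a b) = INR (S a) / INR (S b).
Proof. unfold q. rewrite p1_pr, p2_pr. reflexivity. Qed.

Lemma INR_S_pos n : 0 < INR (S n).
Proof. apply lt_0_INR. lia. Qed.

Lemma small_s (eps : R) : 0 < eps -> exists s, forall s', (s <= s')%nat -> 2 / INR (S s') < eps.
Proof. intro H. destruct (archimed_cor1 (eps / 2)) as [N [HN HN0]]. lra.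
  exists N. intros s' Hs'. assert (0 < INR N) by (apply lt_0_INR; lia).
  assert (INR N <= INR (S s')) by (apply le_INR; lia).
  assert (/ INR (S s') <= / INR N) by (apply Rinv_le_contravar; lra).
  unfold Rdiv. lra. Qed.

Lemma small_s_fin (Q : nat -> Prop) (eps : nat -> R) N :
  (forall i, (i < N)%nat -> Q i -> 0 < eps i) ->
  exists s, forall s', (s <= s')%nat -> forall i, (i < N)%nat -> Q i -> 2 / INR (S s') < eps i.
Proof. induction N; intro H.
  - exists 0%nat. intros; lia.
  - destruct IHN as [s1 H1]. intros; apply H; auto; lia.
    destruct (classic (Q N)) as [HQ|HQ].
    + destruct (small_s (eps N)) as [s2 H2]. apply H; auto.
      exists (max s1 s2). intros s' Hs' i Hi Qi. destruct (Nat.eq_dec i N).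
      * subst. apply H2. lia.
      * apply H1; auto; lia.
    + exists s1. intros s' Hs' i Hi Qi. destruct (Nat.eq_dec i N). subst; contradiction.
      apply H1; auto; lia.
Qed.

Section Met.
Variable Y : Type.
Variable MY : RecPresMetric Y.
Variable y : Y.
Variable RL : cf.
Hypothesis HRL : forall m, cfn RL m = 0%nat <->
  Defs.dist MY (pt MY (p1 m)) (pt MY (p1 (p2 m))) < q (p2 (p2 m)).

Lemma q_r' c d s : (d < c * S s)%nat -> (0 < d)%nat ->
  q (pr (c * S s - d - 1) (d * S s - 1)) = INR c / INR d - 1 / INR (S s).
Proof. intros H Hd. rewrite q_pr. replace (S (c * S s - d - 1)) with (c * S s - d)%nat by lia.
  replace (S (d * S s - 1)) with (d * S s)%nat by nia.
  rewrite minus_INR by lia. rewrite !mult_INR. pose proof (INR_S_pos s).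
  assert (0 < INR d) by (apply lt_0_INR; lia). field. lra. Qed.

Lemma chk_sound n : ChkP RL n -> in_ball MY n y ->
  forall i, canon_fin (uof n) i -> in_ball MY i y.
Proof.
  intros [Ha Hb] Hn i Hi. unfold canon_fin, uof in Hi. cbv zeta in Hb. destruct (Hb i Hi) as [H1 H2].
  apply HRL in H2. repeat rewrite ?p1_pr, ?p2_pr in H2. rewrite q_r' in H2 by lia.
  unfold in_ball in *. unfold q at 1 in Hn. rewrite Ha in Hn. rewrite mult_INR in Hn.
  unfold q. set (s := p1 (p1 (p2 n))) in *.
  pose proof (INR_S_pos s). pose proof (INR_S_pos (p1 (p2 n))).
  replace (INR (S (p1 (p2 n))) / (INR (S (p1 (p2 n))) * INR (S s))) with (1 / INR (S s)) in Hn by (field; lra).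
  pose proof (Defs.dist_tri _ MY y (pt MY (p1 n)) (pt MY (p1 i))).
  rewrite (Defs.dist_sym _ MY (pt MY (p1 n))) in H3. lra.
Qed.

Lemma chk_complete k u : (forall i, canon_fin u i -> in_ball MY i y) ->
  exists n, ChkP RL n /\ kof n = k /\ uof n = u /\ in_ball MY n y.
Proof.
  intro Hu.
  destruct (small_s_fin (fun i => canon_fin u i) (fun i => q (p2 i) - Defs.dist MY y (pt MY (p1 i))) u)
    as [s Hs].
  { intros i _ Hi. apply Hu in Hi. unfold in_ball in Hi. lra. }
  specialize (Hs s (le_n _)).
  assert (Hs' : forall i, canon_fin u i -> 2 / INR (S s) < q (p2 i) - Defs.dist MY y (pt MY (p1 i))).
  { intros i Hi. apply Hs; auto. apply mem_lt. exact Hi. }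
  pose proof (INR_S_pos s) as HSs.
  destruct (pt_dense _ MY y (1 / INR (S s))) as [j Hj]. apply Rdiv_lt_0_compat; lra.
  set (p := pr s (pr k u)).
  exists (pr j (pr p (S p * S s - 1))). unfold kof, uof, ChkP. cbv zeta. repeat rewrite ?p1_pr, ?p2_pr.
  unfold p. repeat rewrite ?p1_pr, ?p2_pr. fold p.
  split; [split|split; [reflexivity|split; [reflexivity|]]].
  - nia.
  - intros i Hi. pose proof (Hs' i Hi) as Hsi. unfold q in Hsi at 1.
    set (c := S (p1 (p2 i))) in *. set (d := S (p2 (p2 i))) in *.
    assert (0 < INR c) by (apply lt_0_INR; unfold c; lia).
    assert (0 < INR d) by (apply lt_0_INR; unfold d; lia).
    pose proof (Defs.dist_nonneg _ MY y (pt MY (p1 i))).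
    assert (Hcd : (d < c * S s)%nat).
    { apply INR_lt. rewrite mult_INR.
      assert (1 / INR (S s) < INR c / INR d).
      { assert (1 / INR (S s) <= 2 / INR (S s)). unfold Rdiv. apply Rmult_le_compat_r.
        left. apply Rinv_0_lt_compat. lra. lra. lra. }
      apply (Rmult_lt_compat_r (INR d * INR (S s))) in H2. 2:{ apply Rmult_lt_0_compat; lra. }
      replace (1 / INR (S s) * (INR d * INR (S s))) with (INR d) in H2 by (field; lra).
      replace (INR c / INR d * (INR d * INR (S s))) with (INR c * INR (S s)) in H2 by (field; lra).
      exact H2. }
    split; auto.
    apply HRL. repeat rewrite ?p1_pr, ?p2_pr. rewrite q_r' by (auto; unfold d; lia).
    pose proof (Defs.dist_tri _ MY (pt MY (p1 i)) y (pt MY j)).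
    rewrite (Defs.dist_sym _ MY (pt MY (p1 i)) y) in H2.
    assert (2 / INR (S s) = 2 * (1 / INR (S s))) by (field; lra). lra.
  - unfold in_ball. rewrite p1_pr, p2_pr, q_pr.
    replace (S (S p * S s - 1)) with (S p * S s)%nat by nia. rewrite mult_INR.
    pose proof (INR_S_pos p).
    replace (INR (S p) / (INR (S p) * INR (S s))) with (1 / INR (S s)) by (field; lra). exact Hj.
Qed.
End Met.

Theorem lemma2p9 (X Y : Type) (MX : RecPresMetric X) (MY : RecPresMetric Y)
  (x : X) (y : Y) :
  M_red MX x MY y <-> one_red (jump MX x) (jump MY y).
Proof.
  split.
  - intros [P [[F HF] HP]].
    destruct (rec_lt Y MY) as [f Hf].
    set (g := fun n => proj1_sig (constructive_indefinite_description _ (Hf n))).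
    assert (Hg : forall n, eval f n (g n) /\ (g n = 0%nat <-> (Defs.dist MY (pt MY (p1 n)) (pt MY (p1 (p2 n))) < q (p2 (p2 n)))%R)).
    { intro n. unfold g. destruct (constructive_indefinite_description _ (Hf n)) as [v Hv]. exact Hv. }
    set (RL := {| cprog := f; cfn := g; cok := fun n => proj1 (Hg n) |}).
    assert (HRL : forall m, cfn RL m = 0%nat <-> (Defs.dist MY (pt MY (p1 m)) (pt MY (p1 (p2 m))) < q (p2 (p2 m)))%R).
    { intro m. exact (proj2 (Hg m)). }
    destruct (dir1_index RL F) as [h [Hh [Hinj Hd]]].
    exists h. split; [auto|split; auto]. intro e. unfold jump. split.
    + intros [k [HW Hk]]. destruct (proj1 (HP k) Hk) as [u [HPu Hu]].
      destruct (chk_complete Y MY y RL HRL k u Hu) as [n [Hc [Hk' [Hu' Hn]]]].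
      exists n. split; auto. apply Hd. split; auto. rewrite Hk', Hu'. split; auto. apply HF; auto.
    + intros [n [HW Hn]]. apply Hd in HW as [Hc [HW HFv]].
      pose proof (chk_sound Y MY y RL HRL n Hc Hn) as Hs.
      exists (kof n). split; auto. apply (HP (kof n)). exists (uof n). split; auto. apply HF; auto.
  - intro H. exact (dir2 _ _ H).
Qed.
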